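(* Fix $X\in\mathcal{E}$ and let $I$ be the (extended) Daniell integral associated with $X$. Let $f\in C(\mathbb{R})$ be a positive continuous function with bounded support. Then $f\in\mathbb{L}^\uparrow$ and $I(f)=f\circ X\in\mathcal{E}_+$.
   Context: Let $\mathcal{E}$ be an order complete vector lattice with a weak order unit $E$, $K$ its Stone space (extremally disconnected compact Hausdorff), and $C^\infty(K)$ the vector lattice of continuous functions $K\to[-\infty,\infty]$ finite off a nowhere dense set (identified when equal off a nowhere dense set), which is the universal completion $\mathcal{E}^u$. Fix a Maeda–Ogasawara representation of $\mathcal{E}$ as an order dense ideal of $C^\infty(K)$ with $E$ corresponding to $\mathbf{1}$. The sup-completion is $\mathcal{E}^s=\{f\in C(K,[-\infty,\infty]): f\ge g\text{ for some } g\in\mathcal{E}\}$. For $Y\in\mathcal{E}$, $P_Y$ denotes the band projection onto the band generated by $Y$. For a continuous $f:\mathbb{R}\to\mathbb{R}$ and $X\in C^\infty(K)$, $f\circ X$ denotes the unique element of $C^\infty(K)$ that agrees with $\omega\mapsto f(X(\omega))$ on the open dense set where $X$ is finite. Daniell calculus: $F(\mathbb{R})$ is the algebra of finite disjoint unions of intervals $(a,b]$, $(a,\infty)$, $(-\infty,b]$ ($a,b\in\mathbb{R}$), and $\mathbb{L}$ is the vector lattice of functions $f=\sum_{i=1}^n a_i\mathbf{1}_{S_i}$ with $a_i\in\mathbb{R}$ and $(S_i)$ a partition of $\mathbb{R}$ into sets of $F(\mathbb{R})$. For fixed $X\in\mathcal{E}$ the spectral system is $A_t=E-P_{(X-tE)^+}E$,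 with $A_\infty=\sup_tA_t$, $A_{-\infty}=\inf_tA_t$; the measure $\mu_A$ is $\mu_A(a,b]=A_b-A_a$, $\mu_A(a,\infty)=A_\infty-A_a$, $\mu_A(-\infty,b]=A_b-A_{-\infty}$, extended additively; the Daniell integral associated with $X$ is $I(f)=\sum_i a_i\mu_A(S_i)$ for $f=\sum_ia_i\mathbf{1}_{S_i}\in\mathbb{L}$. $\mathbb{L}^\uparrow$ is the set of $f:\mathbb{R}\to\overline{\mathbb{R}}$ for which there is a sequence $(f_n)\subseteq\mathbb{L}$ with $f_n(t)\uparrow f(t)$ for every $t$, and for such $f$, $I(f)=\sup_nI(f_n)\in\mathcal{E}^s$ (this is independent of the chosen sequence). *)

(* Defs.v *)
From mathcomp Require Import all_boot all_order all_algebra.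
From mathcomp Require Import all_classical all_reals all_analysis.
Set Implicit Arguments. Unset Strict Implicit. Unset Printing Implicit Defensive.
Import Order.TTheory GRing.Theory Num.Theory.
Import numFieldTopology.Exports numFieldNormedType.Exports.
Local Open Scope classical_set_scope.
Local Open Scope ring_scope.
Local Open Scope ereal_scope.

Definition extremally_disconnected (K : topologicalType) : Prop :=
  forall U : set K, open U -> open (closure U).

Definition nowhere_dense (K : topologicalType) (S : set K) : Prop :=
  (closure S)° = set0.

(** * C^oo(K): continuous K -> [-oo,+oo], finite off a nowhere dense set.
    (Two continuous functions equal off a nowhere dense set are equal,
    so no quotient is needed.) *)
Definition Cinf (R : realType) (K : topologicalType) : set (K -> \bar R) :=
  [set h | continuous h /\ nowhere_dense [set w | h w = +oo \/ h w = -oo]].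

Definition is_sum (R : realType) (K : topologicalType) (h f g : K -> \bar R) : Prop :=
  forall w, f w \is a fin_num -> g w \is a fin_num -> h w = f w + g w.

Definition order_dense_ideal_with_unit (R : realType) (K : topologicalType)
    (E : set (K -> \bar R)) : Prop :=
  E `<=` @Cinf R K /\ E (fun _ => 1) /\
  [/\ (forall f g, E f -> E g -> exists h, E h /\ is_sum h f g),
      (forall (c : R) f, E f -> E (fun w => c%:E * f w)),
      (forall f g, E f -> @Cinf R K g -> (forall w, `|g w| <= `|f w|) -> E g)
    & (forall g, @Cinf R K g -> (forall w, 0 <= g w) -> (exists w, g w != 0) ->
        exists f, E f /\ (forall w, 0 <= f w <= g w) /\ exists w, f w != 0)].

Definition disj (R : realType) (K : topologicalType) (u v : K -> \bar R) : Prop :=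
  forall w, Order.min `|u w| `|v w| = 0.

(** u = P_Y 1: u lies in the band {Y}^dd generated by Y and 1 - u in {Y}^d. *)
Definition is_bproj_unit (R : realType) (K : topologicalType)
    (E : set (K -> \bar R)) (Y u : K -> \bar R) : Prop :=
  [/\ E u,
      (forall z, E z -> disj z Y -> disj u z),
      E (fun w => 1 - u w)
    & disj (fun w => 1 - u w) Y].

Definition bproj_unit (R : realType) (K : topologicalType)
    (E : set (K -> \bar R)) (Y : K -> \bar R) : K -> \bar R :=
  xget (fun _ => 0) (is_bproj_unit E Y).

Definition is_lub_in (R : realType) (K : topologicalType)
    (S A : set (K -> \bar R)) (u : K -> \bar R) : Prop :=
  [/\ S u, (forall a, A a -> forall w, a w <= u w)
   & (forall v, S v -> (forall a, A a -> forall w, a w <= v w) -> forall w, u w <= v w)].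

Definition is_glb_in (R : realType) (K : topologicalType)
    (S A : set (K -> \bar R)) (u : K -> \bar R) : Prop :=
  [/\ S u, (forall a, A a -> forall w, u w <= a w)
   & (forall v, S v -> (forall a, A a -> forall w, v w <= a w) -> forall w, v w <= u w)].

Definition spec (R : realType) (K : topologicalType) (E : set (K -> \bar R))
    (X : K -> \bar R) (t : R) : K -> \bar R :=
  fun w => 1 - bproj_unit E (fun w' => Order.max (X w' - t%:E) 0) w.

Definition spec_pinfty (R : realType) (K : topologicalType) (E : set (K -> \bar R))
    (X : K -> \bar R) : K -> \bar R :=
  xget (fun _ => 0) (is_lub_in E (range (spec E X))).

Definition spec_ninfty (R : realType) (K : topologicalType) (E : set (K -> \bar R))
    (X : K -> \bar R) : K -> \bar R :=
  xget (fun _ => 0) (is_glb_in E (range (spec E X))).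

Inductive intv (R : realType) := Ioc of R & R | Ioi of R | Iic of R.

Definition in_intv (R : realType) (J : intv R) (t : R) : bool :=
  match J with
  | Ioc a b => ((a < t) && (t <= b))%R
  | Ioi a => (a < t)%R
  | Iic b => (t <= b)%R
  end.

Definition intv_wf (R : realType) (J : intv R) : bool :=
  match J with Ioc a b => (a < b)%R | _ => true end.

Definition muA (R : realType) (K : topologicalType) (E : set (K -> \bar R))
    (X : K -> \bar R) (J : intv R) : K -> \bar R :=
  fun w => match J with
  | Ioc a b => spec E X b w - spec E X a w
  | Ioi a => spec_pinfty E X w - spec E X a w
  | Iic b => spec E X b w - spec_ninfty E X w
  end.

(** An element of L is given by a representation
    [:: (a_1, S_1); ...; (a_n, S_n)] where each S_i in F(R) is a finite
    disjoint union of generating intervals (a list), and the S_i partition R. *)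
Definition Lrep (R : realType) := seq (R * seq (intv R)).

Definition Lrep_intvs (R : realType) (r : Lrep R) : seq (intv R) :=
  flatten [seq p.2 | p <- r].

Definition Lrep_wf (R : realType) (r : Lrep R) : Prop :=
  let s := Lrep_intvs r in
  [/\ all (@intv_wf R) s,
      (forall i j, (i < j < size s)%N -> forall t,
          ~~ (in_intv (nth (Iic 0%R) s i) t && in_intv (nth (Iic 0%R) s j) t))
    & (forall t : R, has (fun J => in_intv J t) s)].

Definition Lrep_fun (R : realType) (r : Lrep R) : R -> R :=
  fun t => (\sum_(p <- r) \sum_(J <- p.2) (if in_intv J t then p.1 else 0))%R.

Definition Ival (R : realType) (K : topologicalType) (E : set (K -> \bar R))
    (X : K -> \bar R) (r : Lrep R) : K -> \bar R :=
  fun w => \sum_(p <- r) (p.1%:E * \sum_(J <- p.2) muA E X J w).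

Definition incr_to (R : realType) (fn : nat -> R -> R) (f : R -> R) : Prop :=
  forall t, {homo (fun n => fn n t) : n m / (n <= m)%N >-> (n <= m)%R}
            /\ (fun n => fn n t) @ \oo --> f t.

Definition Esup (R : realType) (K : topologicalType) (E : set (K -> \bar R)) :
    set (K -> \bar R) :=
  [set h | continuous h /\ exists g, E g /\ forall w, g w <= h w].

(* Main.v *)
Require Import Defs.
From mathcomp Require Import all_boot all_order all_algebra.
From mathcomp Require Import all_classical all_reals all_analysis.
From mathcomp Require Import ring lra zify.
Import Order.TTheory GRing.Theory Num.Theory.
Import numFieldTopology.Exports numFieldNormedType.Exports.
Local Open Scope classical_set_scope.
Local Open Scope ring_scope.

Lemma ereal_mid (R : realType) (x y : \bar R) : (x < y)%E -> exists c : R, (x < c%:E < y)%E.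
Proof.
case: x => [r||]; case: y => [s||] //=.
- rewrite lte_fin => rs; exists ((r + s) / 2); rewrite !lte_fin.
  by apply/andP; split; [rewrite midf_lt|rewrite midf_lt].
- by move=> _; exists (r + 1); rewrite !lte_fin ltrDl ltr01 ltry.
- by move=> _; exists (s - 1); rewrite ltNyr lte_fin gtrDl oppr_lt0 ltr01.
- by move=> _; exists 0; rewrite ltNyr ltry.
Qed.

Section Topo.
Variables (R : realType) (K : topologicalType).
Hypotheses (hK : hausdorff_space K) (cK : compact [set: K])
  (eK : extremally_disconnected K).

Lemma regK (w : K) (W : set K) : nbhs w W -> exists V : set K, [/\ open V, V w & closure V `<=` W].
Proof.
move=> Ww.
have [B Bw BW] := @compact_regular K w setT hK cK (@filterT _ (nbhs w) _) W Ww.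
exists (B°); split; first exact: open_interior.
  exact: Bw.
apply: subset_trans BW; apply: closureS; exact: interior_subset.
Qed.

Definition ind (C : set K) : K -> \bar R := fun w => if `[< C w >] then 1%E else 0%E.

Lemma ind_cont C : open C -> closed C -> continuous (ind C).
Proof.
move=> oC cC w; apply: (near_cst_continuous (ind C w)).
case: (pselect (C w)) => Cw.
  have : nbhs w C by apply: open_nbhs_nbhs; split.
  apply: filterS => y Cy; by rewrite /ind !asboolT.
have : nbhs w (~` C) by apply: open_nbhs_nbhs; split => //; exact: closed_openC.
apply: filterS => y Cy; by rewrite /ind !asboolF.
Qed.

Lemma nd_dense (S U : set K) (w : K) : nowhere_dense S -> open U -> U w -> exists2 w', U w' & ~ S w'.
Proof.
move=> nS oU Uw; apply: contrapT => hn.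
have US : U `<=` closure S.
  move=> x Ux; apply: subset_closure; apply: contrapT => Sx; apply: hn; by exists x.
have : (closure S)° w.
  by move: US; rewrite open_subsetE // => /(_ w Uw).
by rewrite nS.
Qed.

Lemma le_dense (a b : K -> \bar R) : continuous a -> continuous b ->
  (forall U w, open U -> U w -> exists2 w', U w' & (a w' <= b w')%E) ->
  forall w, (a w <= b w)%E.
Proof.
move=> ca cb hd w; rewrite leNgt; apply/negP => /ereal_mid [c /andP[bc ca']].
have o1 : open (a @^-1` [set y | c%:E < y]%E).
  apply: open_comp; [move=> x _; exact: ca | exact: open_ereal_gt_ereal].
have o2 : open (b @^-1` [set y | y < c%:E]%E).
  apply: open_comp; [move=> x _; exact: cb | exact: open_ereal_lt_ereal].
have [w' [/= h1 h2] h3] := hd _ w (openI o1 o2) (conj ca' bc).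
by move: (lt_trans h2 h1); rewrite ltNge h3.
Qed.

End Topo.

Section Real.
Variable R : realType.

Lemma seq_le_lim (u : nat -> R) l : {homo u : n m / (n <= m)%N >-> (n <= m)%R} ->
  u @ \oo --> l -> forall n, (u n <= l)%R.
Proof.
move=> hu hc n; have := nondecreasing_cvgn_le hu (cvgP _ hc) n.
by rewrite (cvg_lim _ hc).
Qed.

Lemma lim_le_ub (u : nat -> R) l b : u @ \oo --> l -> (forall n, (u n <= b)%R) -> (l <= b)%R.
Proof.
move=> hc hb; rewrite leNgt; apply/negP => bl.
have e0 : (0 < l - b)%R by rewrite subr_gt0.
have [N _ hN] := cvgr_dist_lt _ _ hc _ e0.
have := hN N (leqnn N); rewrite ltr_norml => /andP[_].
by rewrite ltrBlDr addrC -ltrBlDr opprB addrC subrK ltNge hb.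
Qed.

Lemma cont_delta (f : R -> R) x e : {for x, continuous f} -> (0 < e)%R ->
  exists2 d, (0 < d)%R & forall t, (`|t - x| < d)%R -> (`|f t - f x| < e)%R.
Proof.
move=> fc e0; have [d /= d0 hd] := (nbhs_ballP x _).1 (cvgr_dist_lt _ _ fc _ e0).
exists d => // t ht; rewrite distrC; apply: hd; rewrite -ball_normE /= distrC //.
Qed.

End Real.
Section Approx.
Variable R : realType.

Definition pw (n : nat) : R := 2%:R ^+ n.
Definition ga (n k : nat) : R := k%:R / pw n - n%:R.
Definition LL (n : nat) : nat := (2 * n * 2 ^ n)%N.

Lemma pw_gt0 n : 0 < pw n. Proof. by rewrite /pw exprn_gt0 // ltr0n. Qed.

Lemma ga0 n : ga n 0 = - n%:R.
Proof. by rewrite /ga mul0r add0r. Qed.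

Lemma ga_LL n : ga n (LL n) = n%:R.
Proof.
rewrite /ga /LL natrM natrX -/(pw n) mulrK; last by rewrite unitfE gt_eqF // pw_gt0.
by rewrite natrM mulr2n mulrDl mul1r addrK.
Qed.

Lemma ga_lt n i j : (ga n i < ga n j) = (i < j)%N.
Proof. by rewrite /ga ltrD2r ltr_pM2r ?invr_gt0 ?pw_gt0 // ltr_nat. Qed.

Lemma ga_le n i j : (ga n i <= ga n j) = (i <= j)%N.
Proof. by rewrite /ga lerD2r ler_pM2r ?invr_gt0 ?pw_gt0 // ler_nat. Qed.

Lemma ga_emb n k : ga n k = ga n.+1 (2 * k + 2 ^ n.+1)%N.
Proof.
rewrite /ga /pw natrD !natrM natrX exprS.
have h : (2%:R : R) ^+ n != 0 by rewrite expf_neq0 // pnatr_eq0.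
by field; rewrite h //= ?pnatr_eq0.
Qed.

Lemma ga_step n k : ga n k.+1 = ga n k + (pw n)^-1.
Proof. by rewrite /ga -natr1 mulrDl mul1r addrAC. Qed.


Definition Jn n k : intv R :=
  if k == 0%N then Iic (ga n 0) else if (k <= LL n)%N then Ioc (ga n k.-1) (ga n k)
  else Ioi (ga n (LL n)).

Lemma in_J_le n i t : (i <= LL n)%N -> in_intv (Jn n i) t -> t <= ga n i.
Proof.
rewrite /Jn; case: eqP => [-> //|i0 iL]; by rewrite iL /= => /andP[].
Qed.

Lemma in_J_gt n j t : (0 < j)%N -> (j <= (LL n).+1)%N -> in_intv (Jn n j) t -> ga n j.-1 < t.
Proof.
rewrite /Jn; case: eqP => [-> //|j0 _]; case: ifP => jL.
  by move=> _ /= /andP[].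
move=> jL1 /=; have -> : j = (LL n).+1 by apply/eqP; rewrite eqn_leq jL1 ltnNge jL.
by [].
Qed.

Lemma J_disj n i j t : (i < j)%N -> (j <= (LL n).+1)%N ->
  ~~ (in_intv (Jn n i) t && in_intv (Jn n j) t).
Proof.
move=> ij jL; apply/negP => /andP[hi hj].
have iL : (i <= LL n)%N by rewrite -ltnS (leq_trans ij jL).
have := in_J_le _ _ _ iL hi; have := in_J_gt _ _ _ (leq_ltn_trans (leq0n i) ij) jL hj.
move=> h1 h2; have := lt_le_trans h1 h2; rewrite ga_lt.
by case: j ij {jL hj h1} => // j /=; rewrite ltnS => /leq_gtF ->.
Qed.

Lemma J_wf n k : intv_wf (Jn n k).
Proof.
rewrite /Jn; case: eqP => // k0; case: ifP => // _ /=.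
by rewrite ga_lt; case: k k0 => //= k _.
Qed.

Lemma J_cover n t : exists k, (k <= (LL n).+1)%N /\ in_intv (Jn n k) t.
Proof.
case: (leP t (ga n 0)) => t0.
  by exists 0%N; rewrite /Jn eqxx.
case: (ltP (ga n (LL n)) t) => tL.
  exists (LL n).+1; split => //; rewrite /Jn /= ltnn //.
have exP : exists k, t <= ga n k by exists (LL n).
case: (ex_minnP exP) => m Pm minm.
have mL : (m <= LL n)%N by apply: minm.
have m0 : m != 0%N by apply/eqP => m0; move: Pm; rewrite m0 leNgt t0.
exists m; split; first exact: leq_trans mL (leqnSn _).
rewrite /Jn (negPf m0) mL /= Pm andbT ltNge; apply/negP => h.
have := minm _ h; move: m0; case: (m) => // m' _ /=; by rewrite ltnn.
Qed.

Variable f : R -> R.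
Hypotheses (fc : continuous f) (f0 : forall x, 0 <= f x).

Definition cell n k : set R := [set f x | x in [set x | ga n k.-1 <= x <= ga n k]].


Definition cn n k : R := if (0 < k <= LL n)%N then inf (cell n k) else 0.

Definition rn n : Lrep R := [seq (cn n k, [:: Jn n k]) | k <- iota 0 (LL n).+2].

Lemma intvs_rn n : Lrep_intvs (rn n) = [seq Jn n k | k <- iota 0 (LL n).+2].
Proof.
rewrite /Lrep_intvs /rn; elim: (iota 0 (LL n).+2) => //= k s ->; by [].
Qed.

Lemma cell_ne n k : (0 < k)%N -> cell n k !=set0.
Proof.
move=> k0; exists (f (ga n k)); exists (ga n k) => //=.
by rewrite lexx andbT ga_le leq_pred.
Qed.

Lemma cell_lb n k : has_lbound (cell n k).
Proof. by exists 0 => _ [x _ <-]; exact: f0. Qed.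

Lemma cn_ge0 n k : 0 <= cn n k.
Proof.
rewrite /cn; case: ifP => // /andP[k0 _].
apply: lb_le_inf; first exact: cell_ne.
by move=> _ [x _ <-]; exact: f0.
Qed.

Lemma cn_le n k x : (0 < k <= LL n)%N -> ga n k.-1 <= x <= ga n k -> cn n k <= f x.
Proof.
move=> hk hx; rewrite /cn hk; apply: ge_inf; first exact: cell_lb.
by exists x.
Qed.

Lemma cn_ge n k b : (0 < k <= LL n)%N ->
  (forall x, ga n k.-1 <= x <= ga n k -> b <= f x) -> b <= cn n k.
Proof.
move=> hk hb; rewrite /cn hk; apply: lb_le_inf; first by case/andP: hk => k0 _; exact: cell_ne.
by move=> _ [x hx <-]; exact: hb.
Qed.

Lemma rn_wf n : Lrep_wf (rn n).
Proof.
rewrite /Lrep_wf intvs_rn; set s := iota _ _; split.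
- by rewrite all_map; apply/allP => k _; exact: J_wf.
- move=> i j /andP[ij]; rewrite /s size_map size_iota => jL t.
  rewrite (nth_map 0%N) ?size_iota ?(ltn_trans ij jL) //.
  rewrite (nth_map 0%N) ?size_iota // !nth_iota ?(ltn_trans ij jL) // !add0n.
  exact: J_disj.
- move=> t; have [k [kL hk]] := J_cover n t.
  rewrite has_map; apply/hasP; exists k => //; by rewrite /s mem_iota add0n ltnS.
Qed.

Lemma rn_val n t k : (k <= (LL n).+1)%N -> in_intv (Jn n k) t -> Lrep_fun (rn n) t = cn n k.
Proof.
move=> kL hk; rewrite /Lrep_fun /rn big_map.
under eq_bigr do rewrite big_seq1.
rewrite (bigD1_seq k) ?mem_iota ?add0n ?ltnS ?iota_uniq // hk.
rewrite big1_seq; first by rewrite /= addr0.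
move=> i /andP[ik]; rewrite mem_iota add0n ltnS => iL.
case: ifP => // hi; exfalso.
case: (ltngtP i k) => [lt|gt|eq]; last by move: ik; rewrite eq eqxx.
  by have := J_disj n i k t lt kL; rewrite hi hk.
by have := J_disj n k i t gt iL; rewrite hi hk.
Qed.

Lemma J_mid n k t : (0 < k <= LL n)%N -> in_intv (Jn n k) t -> ga n k.-1 < t <= ga n k.
Proof.
case/andP => k0 kL; rewrite /Jn; case: eqP => [k0'|_]; first by move: k0; rewrite k0'.
by rewrite kL.
Qed.

Lemma rn_mono n t : Lrep_fun (rn n) t <= Lrep_fun (rn n.+1) t.
Proof.
have [k [kL hk]] := J_cover n t; have [k' [kL' hk']] := J_cover n.+1 t.
rewrite (rn_val _ _ _ kL hk) (rn_val _ _ _ kL' hk').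
case hkm: (0 < k <= LL n)%N; last by rewrite /cn hkm cn_ge0.
have /andP[t1 t2] := J_mid _ _ _ hkm hk.
have h0 : ga n 0 <= ga n k.-1 by rewrite ga_le.
have hL : ga n k <= ga n (LL n) by rewrite ga_le; case/andP: hkm.
rewrite ga0 in h0; rewrite ga_LL in hL.
have k'0 : (0 < k')%N.
  rewrite lt0n; apply/negP => /eqP k'0; move: hk'; rewrite k'0 /Jn /= ga0 => h.
  move: (lt_le_trans t1 h); rewrite -natr1 => h'; lra.
have k'L : (k' <= LL n.+1)%N.
  rewrite leqNgt; apply/negP => hlt.
  have e : k' = (LL n.+1).+1 by apply/eqP; rewrite eqn_leq kL' hlt.
  have := in_J_gt _ _ _ k'0 kL' hk'; rewrite e /= ga_LL -natr1 => h; lra.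
have hk'm : (0 < k' <= LL n.+1)%N by rewrite k'0 k'L.
have /andP[s1 s2] := J_mid _ _ _ hk'm hk'.
apply: cn_ge => // x /andP[x1 x2]; apply: cn_le => //; apply/andP; split.
  apply: le_trans x1; rewrite (ga_emb n k.-1) ga_le leqNgt; apply/negP => lt.
  have : ga n k.-1 < ga n.+1 k' by exact: lt_le_trans t1 s2.
  by rewrite (ga_emb n k.-1) ga_lt => h; lia.
apply: (le_trans x2); rewrite (ga_emb n k) ga_le leqNgt; apply/negP => lt.
have : ga n.+1 k'.-1 < ga n k by exact: lt_le_trans s1 t2.
by rewrite (ga_emb n k) ga_lt => h; lia.
Qed.

Lemma rn_cvg t : (fun n => Lrep_fun (rn n) t) @ \oo --> f t.
Proof.
apply/cvgrPdist_le => e e0.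
have [d d0 hd] := @cont_delta R f t e (fc t) e0.
have hb : 0 <= `|t| + d^-1 by rewrite addr_ge0 // invr_ge0 ltW.
have hN := archi_boundP hb.
exists (Num.Def.archi_bound (`|t| + d^-1)) => // n /= Nn.
have nR : `|t| + d^-1 < n%:R by apply: (lt_le_trans hN); rewrite ler_nat.
have td : `|t| < n%:R by apply: le_lt_trans nR; rewrite lerDl invr_ge0 ltW.
have [k [kL hk]] := J_cover n t.
have km : (0 < k <= LL n)%N.
  apply/andP; split.
    rewrite lt0n; apply/negP => /eqP k0; move: hk; rewrite k0 /Jn /= ga0 => h.
    have := ler_normr t; move: td => /ltr_normlP [a b]; lra.
  rewrite leqNgt; apply/negP => hlt.
  have e1 : k = (LL n).+1 by apply/eqP; rewrite eqn_leq kL hlt.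
  have := in_J_gt _ _ _ (leq_ltn_trans (leq0n _) hlt) kL hk.
  rewrite e1 /= ga_LL => h; move: td => /ltr_normlP [a b]; lra.
rewrite (rn_val _ _ _ kL hk).
have /andP[t1 t2] := J_mid _ _ _ km hk.
have step : ga n k = ga n k.-1 + (pw n)^-1.
  by rewrite -ga_step prednK //; case/andP: km.
have pwd : (pw n)^-1 < d.
  rewrite invf_plt ?posrE ?pw_gt0 //.
  have npw : n%:R < pw n by rewrite /pw -natrX ltr_nat ltn_expl.
  have := normr_ge0 t; lra.
have cle : cn n k <= f t by apply: cn_le => //; rewrite t2 ltW.
have cge : f t - e <= cn n k.
  apply: cn_ge => // x /andP[x1 x2].
  have hx : `|x - t| < d.
    rewrite ltr_norml; apply/andP; split; lra.
  have := hd x hx; rewrite ltr_norml => /andP[a _]; lra.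
rewrite ger0_norm ?subr_ge0 //; lra.
Qed.

Lemma first_part : exists r : nat -> Lrep R,
      (forall n, Lrep_wf (r n)) /\ incr_to (fun n => Lrep_fun (r n)) f.
Proof.
exists rn; split; first exact: rn_wf.
move=> t; split; last exact: rn_cvg.
by apply/nondecreasing_seqP => n; exact: rn_mono.
Qed.

End Approx.

Section Spec.
Variables (R : realType) (K : topologicalType) (E : set (K -> \bar R)) (X : K -> \bar R).
Hypotheses (hK : hausdorff_space K) (cK : compact [set: K])
  (eK : extremally_disconnected K) (hE : order_dense_ideal_with_unit E) (EX : E X).
Local Open Scope ereal_scope.

Let Einf : E `<=` @Cinf R K. Proof. by case: hE. Qed.
Let E1 : E (fun _ => 1). Proof. by case: hE => _ []. Qed.
Let Eideal : forall f g, E f -> @Cinf R K g -> (forall w, `|g w| <= `|f w|) -> E g.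
Proof. by case: hE => _ [_ []]. Qed.
Let Edense : forall g, @Cinf R K g -> (forall w, 0 <= g w) -> (exists w, g w != 0) ->
        exists f, E f /\ (forall w, 0 <= f w <= g w) /\ exists w, f w != 0.
Proof. by case: hE => _ [_ []]. Qed.

Lemma Econt f : E f -> continuous f. Proof. by move=> /Einf []. Qed.

Let Xc : continuous X. Proof. exact: Econt. Qed.

Lemma closed_eqv (v : K -> \bar R) c : continuous v -> closed [set w | v w = c].
Proof.
move=> cv.
have -> : [set w | v w = c] = v @^-1` [set y | c <= y] `&` v @^-1` [set y | y <= c].
  apply/seteqP; split => w /=; first by move=> ->.
  by case=> h1 h2; apply/eqP; rewrite eq_le h1 h2.
by apply: closedI; apply: preimage_closed;
  [move=> x _; exact: cv | exact: closed_ereal_le_ereal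
  |move=> x _; exact: cv | exact: closed_ereal_ge_ereal].
Qed.

Lemma cont_closure (v : K -> \bar R) c (A : set K) : continuous v ->
  (forall w, A w -> v w = c) -> forall w, closure A w -> v w = c.
Proof.
move=> cv hA w Aw; have cl := @closed_eqv v c cv; apply: cl.
exact: (closureS hA) Aw.
Qed.

Lemma disjP (u v : K -> \bar R) : disj u v <-> forall w, u w = 0 \/ v w = 0.
Proof.
split => h w.
  move: (h w); rewrite /Order.min; case: ifP => _ /eqP; rewrite abse_eq0 => /eqP; auto.
case: (h w) => ->; rewrite abse0.
  by rewrite min_l // abse_ge0.
by rewrite min_r // abse_ge0.
Qed.

Definition G (t : R) := closure [set w | t%:E < X w].

Lemma openXgt t : open [set w | t%:E < X w].
Proof.
by apply: (@open_comp _ _ X [set y | t%:E < y]); [move=> x _; exact: Xc | exact: open_ereal_gt_ereal].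
Qed.

Lemma openXlt t : open [set w | X w < t%:E].
Proof.
by apply: (@open_comp _ _ X [set y | y < t%:E]); [move=> x _; exact: Xc | exact: open_ereal_lt_ereal].
Qed.

Lemma G_open t : open (G t). Proof. exact: eK (openXgt t). Qed.
Lemma G_closed t : closed (G t). Proof. exact: closed_closure. Qed.
Lemma G_mono s t : (s <= t)%R -> G t `<=` G s.
Proof. move=> st; apply: closureS => w /=; apply: le_lt_trans; by rewrite lee_fin. Qed.
Lemma G_in t w : t%:E < X w -> G t w.
Proof. by move=> h; apply: subset_closure. Qed.
Lemma G_out t w : X w < t%:E -> ~ G t w.
Proof.
move=> h Gw; have : nbhs w [set w | X w < t%:E] by apply: open_nbhs_nbhs; split => //; exact: openXlt.
move=> /Gw [x [/= h1 h2]]; by move: (lt_trans h1 h2); rewrite ltxx.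
Qed.

Definition Yf (t : R) := fun w' => Order.max (X w' - t%:E) 0.

Lemma Yf0 t w : Yf t w = 0 <-> ~ (t%:E < X w).
Proof.
rewrite /Yf; split.
  move=> h ht; have : 0 < Order.max (X w - t%:E) 0 by rewrite lt_max sube_gt0 ht.
  by rewrite h ltxx.
move=> /negP; rewrite -leNgt -sube_le0 => h.
by rewrite max_r.
Qed.

Lemma indT (C : set K) w : C w -> ind R K C w = 1.
Proof. by move=> Cw; rewrite /ind asboolT. Qed.
Lemma indF (C : set K) w : ~ C w -> ind R K C w = 0.
Proof. by move=> Cw; rewrite /ind asboolF. Qed.

Lemma nd0 : nowhere_dense (@set0 K).
Proof. by rewrite /nowhere_dense closure0 interior0. Qed.

Lemma Cinf_ind (C : set K) : open C -> closed C -> @Cinf R K (ind R K C).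
Proof.
move=> oC cC; split; first exact: ind_cont.
have -> : [set w | ind R K C w = +oo \/ ind R K C w = -oo] = set0.
  apply/seteqP; split => w //=; rewrite /ind; case: asboolP => _ []//.
exact: nd0.
Qed.

Lemma E_ind (C : set K) : open C -> closed C -> E (ind R K C).
Proof.
move=> oC cC; apply: (Eideal _ _ E1); first exact: Cinf_ind.
move=> w; rewrite /ind; case: asboolP => _; rewrite ?abse0 ?abse_ge0 //.
Qed.

Lemma one_minus_ind (C : set K) w : 1 - ind R K C w = ind R K (~` C) w.
Proof.
case: (pselect (C w)) => Cw.
  rewrite indT // indF; last by move=> /(_ Cw).
  by rewrite subee.
rewrite indF // indT //.
by rewrite sube0.
Qed.

Lemma is_bp t : is_bproj_unit E (Yf t) (ind R K (G t)).
Proof.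
split.
- exact: E_ind (G_open t) (G_closed t).
- move=> z Ez /disjP hz; apply/disjP => w.
  case: (pselect (G t w)) => Gw; last by left; rewrite indF.
  right; apply: (@cont_closure z 0 [set w | t%:E < X w] (@Econt _ Ez)) => // w' /= hw'.
  by case: (hz w') => // /Yf0.
- have -> : (fun w => 1 - ind R K (G t) w) = ind R K (~` G t).
    by apply/funext => w; rewrite one_minus_ind.
  apply: E_ind; first exact: closed_openC (G_closed t).
  exact: open_closedC (G_open t).
- apply/disjP => w; case: (pselect (t%:E < X w)) => h.
    by left; rewrite one_minus_ind indF // => /(_ (@G_in _ _ h)).
  by right; apply/Yf0.
Qed.

Lemma bp_uniq t u : is_bproj_unit E (Yf t) u -> u = ind R K (G t).
Proof.
case=> Eu hu E1u /disjP h1u.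
have u1 : forall w, t%:E < X w -> u w = 1.
  move=> w hw; case: (h1u w) => [|/Yf0 //].
  case: (u w) => [r||] //= /eqP; rewrite ?eqe.
  by rewrite subr_eq0 => /eqP <-.
have uG : forall w, G t w -> u w = 1 := @cont_closure u 1 _ (@Econt _ Eu) u1.
apply/funext => w; case: (pselect (G t w)) => Gw; first by rewrite indT // uG.
rewrite indF //; apply: contrapT => uw0.
set W := ~` G t `&` [set w | u w <> 0].
have oW : open W.
  apply: openI; first exact: closed_openC (G_closed t).
  have -> : [set w | u w <> 0] = ~` [set w | u w = 0] by [].
  exact: closed_openC (@closed_eqv u 0 (@Econt _ Eu)).
have [V [oV Vw cVW]] := @regK K hK cK w W (open_nbhs_nbhs (conj oW (conj Gw uw0))).
set C := closure V.
have oC : open C := @eK V oV.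
have clC : closed C by exact: closed_closure.
have [z [Ez [zb [w0 zw0]]]] : exists f, E f /\ (forall w, 0 <= f w <= ind R K C w) /\ exists w, f w != 0.
  apply: Edense; first exact: Cinf_ind.
    by move=> x; rewrite /ind; case: asboolP.
  by exists w; rewrite indT //; apply: subset_closure.
have z0 : forall x, ~ C x -> z x = 0.
  move=> x Cx; have := zb x; rewrite indF // => /andP[a b].
  by apply/eqP; rewrite eq_le a b.
have Cw0 : C w0 by apply: contrapT => Cw0; move: zw0; rewrite z0 // eqxx.
have dz : disj z (Yf t).
  apply/disjP => w'; case: (pselect (C w')) => Cw'.
    right; apply/Yf0 => ht; have [hG _] := cVW w' Cw'; apply: hG; exact: G_in.
  by left; apply: z0.
have := hu z Ez dz; move/disjP => /(_ w0); case => h.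
  by have [_ /= ] := cVW w0 Cw0.
by move: zw0; rewrite h eqxx.
Qed.

Lemma spec_val t w : spec E X t w = ind R K (~` G t) w.
Proof.
rewrite /spec /bproj_unit (xget_unique _ (is_bp t) (@bp_uniq t)).
exact: one_minus_ind.
Qed.

Let Escal : forall (c : R) f, E f -> E (fun w => c%:E * f w).
Proof. by case: hE => _ [_ []]. Qed.

Lemma E0 : E (fun _ => 0).
Proof.
have := Escal 0 _ E1; congr E; apply/funext => w; by rewrite mul0e.
Qed.

Lemma spec1 t w : X w < t%:E -> spec E X t w = 1.
Proof. by move=> h; rewrite spec_val indT //; apply: G_out. Qed.

Lemma spec0 t w : t%:E < X w -> spec E X t w = 0.
Proof. by move=> h; rewrite spec_val indF // => /(_ (@G_in _ _ h)). Qed.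

Lemma spec01 t w : spec E X t w = 0 \/ spec E X t w = 1.
Proof. by rewrite spec_val /ind; case: asboolP; auto. Qed.

Lemma Xnd : nowhere_dense [set w | X w = +oo \/ X w = -oo].
Proof. by case: (Einf _ EX). Qed.

Lemma lub_uniq (S A : set (K -> \bar R)) u u' :
  is_lub_in S A u -> is_lub_in S A u' -> u = u'.
Proof.
case=> Su ub lst [Su' ub' lst']; apply/funext => w; apply/eqP; rewrite eq_le.
by rewrite (lst _ Su' ub') (lst' _ Su ub).
Qed.

Lemma glb_uniq (S A : set (K -> \bar R)) u u' :
  is_glb_in S A u -> is_glb_in S A u' -> u = u'.
Proof.
case=> Su ub lst [Su' ub' lst']; apply/funext => w; apply/eqP; rewrite eq_le.
by rewrite (lst _ Su' ub') (lst' _ Su ub).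
Qed.

Lemma finite_dense U w : open U -> U w ->
  exists2 w', U w' & X w' \is a fin_num.
Proof.
move=> oU Uw; have [w' Uw' hw'] := @nd_dense K _ _ _ Xnd oU Uw; exists w' => //.
by rewrite fin_numE; apply/andP; split; apply/negP => /eqP h; apply: hw'; rewrite /= h; auto.
Qed.

Lemma is_lub_one : is_lub_in E (range (spec E X)) (fun _ => 1).
Proof.
split; [exact: E1 | by move=> a [t _ <-] w; have [->|->] := spec01 t w |].
move=> v Ev hv; apply: le_dense; [exact: cst_continuous | exact: Econt |].
move=> U w oU Uw; have [w' Uw' fw'] := finite_dense _ _ oU Uw; exists w' => //.
apply: (le_trans _ (hv _ (ex_intro2 _ _ (fine (X w') + 1)%R I erefl) w')).
by rewrite spec1 // -(fineK fw') lte_fin ltrDl.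
Qed.

Lemma spec_pinftyE : spec_pinfty E X = (fun _ => 1).
Proof.
rewrite /spec_pinfty; apply: xget_unique; first exact: is_lub_one.
by move=> y hy; apply: lub_uniq hy is_lub_one.
Qed.

Lemma is_glb_zero : is_glb_in E (range (spec E X)) (fun _ => 0).
Proof.
split; [exact: E0 | by move=> a [t _ <-] w; have [->|->] := spec01 t w |].
move=> v Ev hv; apply: le_dense; [exact: Econt | exact: cst_continuous |].
move=> U w oU Uw; have [w' Uw' fw'] := finite_dense _ _ oU Uw; exists w' => //.
apply: (le_trans (hv _ (ex_intro2 _ _ (fine (X w') - 1)%R I erefl) w')).
by rewrite spec0 // -(fineK fw') lte_fin gtrDl oppr_lt0.
Qed.

Lemma spec_ninftyE : spec_ninfty E X = (fun _ => 0).
Proof.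
rewrite /spec_ninfty; apply: xget_unique; first exact: is_glb_zero.
by move=> y hy; apply: glb_uniq hy is_glb_zero.
Qed.

Lemma specG t w : G t w -> spec E X t w = 0.
Proof. by move=> h; rewrite spec_val indF // => /(_ h). Qed.

Lemma specNG t w : ~ G t w -> spec E X t w = 1.
Proof. by move=> h; rewrite spec_val indT. Qed.

Definition endpts (J : intv R) : seq R :=
  match J with Ioc a b => [:: a; b] | Ioi a => [:: a] | Iic b => [:: b] end.

Definition specOK w (y : R) (ts : seq R) :=
  forall t, t \in ts -> spec E X t w = (if (y <= t)%R then 1 else 0).

Lemma muA_val J w y : intv_wf J -> specOK w y (endpts J) ->
  muA E X J w = (if in_intv J y then 1 else 0).
Proof.
case: J => [a b|a|b] /= wf h.
- rewrite (h a) ?inE ?eqxx // (h b) ?inE ?eqxx ?orbT //.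
  case: (leP y a) => ya.
    by rewrite (le_trans ya (ltW wf)) subee.
  by case: (leP y b) => yb; rewrite ?sube0 ?subee.
- rewrite spec_pinftyE (h a) ?inE ?eqxx //.
  by case: (leP y a) => ya; rewrite ?subee ?sube0.
- rewrite spec_ninftyE (h b) ?inE ?eqxx //.
  by case: (leP y b) => yb; rewrite sube0.
Qed.

Lemma sum_muA (s : seq (intv R)) w y : all (@intv_wf R) s ->
  specOK w y (flatten (map endpts s)) ->
  \sum_(J <- s) muA E X J w = (\sum_(J <- s) (if in_intv J y then 1 else 0))%:E.
Proof.
elim: s => [|J s IH] /=; first by rewrite !big_nil.
move=> /andP[wJ ws] h; rewrite !big_cons IH //; last first.
  by move=> t ht; apply: h; rewrite mem_cat ht orbT.
rewrite (@muA_val J w y) //; last by move=> t ht; apply: h; rewrite mem_cat ht.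
by case: ifP.
Qed.

Lemma Ival_val (r : Lrep R) w y : all (@intv_wf R) (Lrep_intvs r) ->
  specOK w y (flatten (map endpts (Lrep_intvs r))) ->
  Ival E X r w = (Lrep_fun r y)%:E.
Proof.
rewrite /Ival /Lrep_fun /Lrep_intvs.
elim: r => [|p r IH] /=; first by rewrite !big_nil.
rewrite all_cat map_cat flatten_cat => /andP[w1 w2] h.
rewrite !big_cons IH //; last by move=> t ht; apply: h; rewrite mem_cat ht orbT.
rewrite (@sum_muA _ w y) //; last by move=> t ht; apply: h; rewrite mem_cat ht.
rewrite -EFinM -EFinD; congr (_%:E); congr (_ + _)%R.
rewrite mulr_sumr; apply: eq_bigr => J _; by case: ifP; rewrite ?mulr1 ?mulr0.
Qed.

Lemma avoid (ts : seq R) (x eta : R) : (0 < eta)%R ->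
  exists y : R, [/\ (x < y)%R, (y < x + eta)%R & forall t, t \in ts -> ~ (x < t < y)%R].
Proof.
move=> e0; elim: ts => [|t ts [y [xy yx h]]].
  exists (x + eta / 2)%R; split => //.
    by rewrite ltrDl divr_gt0.
  by rewrite ltrD2l ltr_pdivrMr // ltr_pMr // ltr1n.
case: (boolP (x < t < y)%R) => /andP.
  case=> xt ty; exists t; split => //; first exact: lt_trans ty yx.
  move=> t'; rewrite inE => /orP[/eqP -> /andP[_]|/h ht' /andP[a b]]; first by rewrite ltxx.
  by apply: ht'; rewrite a (lt_trans b ty).
move=> nt; exists y; split => // t'; rewrite inE => /orP[/eqP -> hh|/h //].
by apply: nt; apply/andP.
Qed.

Lemma exists_gt (ts : seq R) (M : R) : exists y : R, (M < y)%R /\ forall t, t \in ts -> (t < y)%R.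
Proof.
elim: ts => [|t ts [y [My h]]]; first by exists (M + 1)%R; rewrite ltrDl.
exists (Num.max y (t + 1))%R; split; first by rewrite lt_max My.
move=> t'; rewrite inE => /orP[/eqP ->|/h ht']; rewrite lt_max ?ltrDl ?ltr01 ?orbT //.
by rewrite ht'.
Qed.

Lemma exists_lt (ts : seq R) (M : R) : exists y : R, (y < M)%R /\ forall t, t \in ts -> (y < t)%R.
Proof.
have [y [My h]] := exists_gt (map -%R ts) (- M)%R.
exists (- y)%R; split; first by rewrite ltrNl.
move=> t ht; rewrite ltrNl; apply: h; exact: map_f.
Qed.

Lemma spec_cut w (ts : seq R) (eta M : R) : (0 < eta)%R -> exists y : R,
  [/\ specOK w y ts,
      (X w \is a fin_num -> (`|y - fine (X w)| < eta)%R),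
      (X w = +oo -> (M < y)%R)
    & (X w = -oo -> (y < - M)%R)].
Proof.
move=> e0; case hX : (X w) => [x||].
- case: (pselect (G x w)) => Gx.
    have [y [xy yx hy]] := @avoid ts x eta e0.
    exists y; split => //.
      move=> t ht; case: (leP y t) => yt.
        by rewrite spec1 // hX lte_fin (lt_le_trans xy yt).
      apply: specG; apply: (@G_mono t x _ w Gx).
      by rewrite leNgt; apply/negP => xt; apply: (hy t ht); rewrite xt yt.
    move=> _ /=; rewrite gtr0_norm ?subr_gt0 // ltrBlDl //.
  exists x; split => //; last by rewrite subrr normr0.
  move=> t ht; case: (leP x t) => xt.
    by apply: specNG => Gt; apply: Gx; apply: (@G_mono x t xt w Gt).
  by rewrite spec0 // hX lte_fin.
- have [y [My h]] := exists_gt ts M.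
  exists y; split => // t ht.
  by rewrite spec0 ?hX ?ltry // leNgt h.
- have [y [My h]] := exists_lt ts (- M)%R.
  exists y; split => // t ht.
  by rewrite spec1 ?hX ?ltNyr // ltW ?h.
Qed.

Lemma good_dense U w : open U -> U w ->
  exists2 w', U w' & X w' \is a fin_num /\ ~ G (fine (X w')) w'.
Proof.
move=> oU Uw; have [w2 Uw2 f2] := finite_dense _ _ oU Uw.
set x2 := fine (X w2).
set W := U `&` [set w | X w < (x2 + 1)%:E] `&` [set w | (x2 - 1)%:E < X w].
have oW : open W := openI (openI oU (openXlt _)) (openXgt _).
have Ww2 : W w2.
  split; [split|] => //=; rewrite -(fineK f2) lte_fin -/x2.
    by rewrite ltrDl ltr01.
  by rewrite gtrDl oppr_lt0 ltr01.
have [V [oV Vw2 cVW]] := @regK K hK cK w2 W (open_nbhs_nbhs (conj oW Ww2)).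
set C := closure V.
have oC : open C := @eK V oV.
have cC : compact C.
  by apply: (subclosed_compact _ cK) => //; exact: closed_closure.
have finC : forall t, C t -> X t \is a fin_num.
  move=> t /cVW [[_ h1] h2] /=; apply/fin_numPlt.
  by rewrite (lt_trans _ h2) ?ltNyr //= (lt_trans h1) ?ltry.
have C0 : C !=set0 by exists w2; apply: subset_closure.
have cf : {within C, continuous (fine \o X)}.
  apply: continuous_in_subspaceT => t; rewrite inE => Ct.
  have h := Xc t; rewrite /continuous_at in h.
  have e := fineK (finC t Ct); rewrite -e in h.
  exact: fine_cvg h.
have [c Cc cmax] := compact_EVT_max C0 cC cf.
move: Cc; rewrite inE => Cc.
exists c; first by have [[]] := cVW c Cc.
split; first exact: finC.
move=> Gc; have nC : nbhs c C := open_nbhs_nbhs (conj oC Cc).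
have [t [/= h1 h2]] := Gc C nC.
have := cmax t; rewrite inE => /(_ h2) /=.
move: h1; rewrite -(fineK (finC t h2)) lte_fin => h1.
by rewrite leNgt h1.
Qed.

Lemma good_specOK w ts : X w \is a fin_num -> ~ G (fine (X w)) w ->
  specOK w (fine (X w)) ts.
Proof.
move=> fw Gw t _; set x := fine (X w); case: (leP x t) => xt.
  by apply: specNG => Gt; apply: Gw; apply: (@G_mono x t xt w Gt).
by rewrite spec0 // -(fineK fw) lte_fin.
Qed.

Variable f : R -> R.
Hypotheses (fc : continuous f) (f0 : forall x, (0 <= f x)%R).
Variable M : R.
Hypothesis hM : forall x, (M < `|x|)%R -> f x = 0%R.

Definition gf (y : \bar R) : \bar R := match y with r%:E => (f r)%:E | _ => 0 end.
Definition hf : K -> \bar R := fun w => gf (X w).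

Lemma gf_cont : continuous gf.
Proof.
case => [r||].
- move=> A /= hA; apply/nbhs_EFin.
  have := (nbhs_EFin A (f r)).1 hA.
  exact: fc.
- apply: (near_cst_continuous 0).
  have := ereal_nbhs_pinfty_gt (num_real M); apply: filterS => y.
  case: y => [r||] //=; rewrite lte_fin => Mr; rewrite hM //.
  exact: lt_le_trans Mr (ler_norm r).
- apply: (near_cst_continuous 0).
  have := ereal_nbhs_ninfty_lt (num_real (- M)%R); apply: filterS => y.
  case: y => [r||] //=; rewrite lte_fin => Mr; rewrite hM //.
  by rewrite -normrN; apply: lt_le_trans (ler_norm _); rewrite ltrNr.
Qed.

Lemma hf_cont : continuous hf.
Proof. move=> w; apply: continuous_comp; [exact: Xc | exact: gf_cont]. Qed.

Lemma f_bound : exists B : R, forall x, (f x <= B)%R.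
Proof.
have cf : {within `[(- `|M|)%R, (`|M|)%R], continuous f} by apply: continuous_subspaceT.
have [c _ hc] := @EVT_max R f (- `|M|)%R (`|M|)%R (ge0_cp (normr_ge0 M)).2 cf.
exists (f c) => x; case: (leP (`|x|)%R (`|M|)%R) => hx.
  by apply: hc; rewrite in_itv /= -ler_norml.
by rewrite hM ?f0 // (le_lt_trans (ler_norm M) hx).
Qed.

Lemma hf0 w : 0 <= hf w.
Proof. by rewrite /hf /gf; case: (X w) => [r||] //=; rewrite lee_fin. Qed.

Lemma E_hf : E hf.
Proof.
have [B hB] := f_bound.
have EB := Escal B _ E1.
apply: (Eideal _ _ EB).
  split; first exact: hf_cont.
  have -> : [set w | hf w = +oo \/ hf w = -oo] = set0.
    by apply/seteqP; split => w //=; rewrite /hf /gf; case: (X w) => [r||] //= [].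
  exact: nd0.
move=> w; rewrite mule1 /hf /gf; case: (X w) => [r||] //=; rewrite !lee_fin ?normr0 ?normr_ge0 //.
rewrite ger0_norm ?f0 //; exact: le_trans (hB r) (ler_norm B).
Qed.

Lemma hf_fin w : X w \is a fin_num -> hf w = (f (fine (X w)))%:E.
Proof. by rewrite /hf /gf; case: (X w). Qed.

Lemma lub_part (r : nat -> Lrep R) : (forall n, Lrep_wf (r n)) ->
  incr_to (fun n => Lrep_fun (r n)) f ->
  is_lub_in (Esup E) (range (fun n => Ival E X (r n))) hf.
Proof.
move=> wf inc.
have le_f : forall n y, (Lrep_fun (r n) y <= f y)%R.
  by move=> n y; exact: (@seq_le_lim R (fun n => Lrep_fun (r n) y) (f y) (inc y).1 (inc y).2 n).
have wfn : forall n, all (@intv_wf R) (Lrep_intvs (r n)) by move=> n; case: (wf n).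
split.
- split; first exact: hf_cont.
  by exists hf; split => //; exact: E_hf.
- move=> _ [n _ <-] w; set ts := flatten (map endpts (Lrep_intvs (r n))).
  have [y0 [ok0 _ _ _]] := spec_cut w ts 1%R M ltr01.
  rewrite (Ival_val _ _ _ (wfn n) ok0).
  case hX : (X w) => [x||].
  + rewrite /hf /gf hX lee_fin; apply/ler_addgt0Pr => e e0.
    have [d d0 hd] := @cont_delta R f x e (fc x) e0.
    have [y [ok hy _ _]] := spec_cut w ts d M d0.
    have : (Lrep_fun (r n) y0)%:E = (Lrep_fun (r n) y)%:E.
      by rewrite -(Ival_val _ _ _ (wfn n) ok0) -(Ival_val _ _ _ (wfn n) ok).
    move=> [->]; apply: (le_trans (le_f n y)).
    have hyx : (`|y - x| < d)%R by have := hy; rewrite hX; apply.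
    have := hd y hyx; rewrite ltr_norml => /andP[_ h].
    by rewrite ltrBlDr in h; rewrite addrC ltW.
  + have [y [ok _ hy _]] := spec_cut w ts 1%R M ltr01.
    have : (Lrep_fun (r n) y0)%:E = (Lrep_fun (r n) y)%:E.
      by rewrite -(Ival_val _ _ _ (wfn n) ok0) -(Ival_val _ _ _ (wfn n) ok).
    move=> [->]; rewrite /hf /gf hX lee_fin; apply: (le_trans (le_f n y)).
    rewrite hM //; apply: lt_le_trans (hy hX) (ler_norm y).
  + have [y [ok _ _ hy]] := spec_cut w ts 1%R M ltr01.
    have : (Lrep_fun (r n) y0)%:E = (Lrep_fun (r n) y)%:E.
      by rewrite -(Ival_val _ _ _ (wfn n) ok0) -(Ival_val _ _ _ (wfn n) ok).
    move=> [->]; rewrite /hf /gf hX lee_fin; apply: (le_trans (le_f n y)).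
    by rewrite hM // -normrN; apply: lt_le_trans (ler_norm _); rewrite ltrNr (hy hX).
- move=> v [vc _] hv; apply: le_dense => //; first exact: hf_cont.
  move=> U w oU Uw; have [w' Uw' [fw' Gw']] := good_dense _ _ oU Uw.
  exists w' => //; set x := fine (X w').
  have Ie : forall n, Ival E X (r n) w' = (Lrep_fun (r n) x)%:E.
    by move=> n; apply: (Ival_val _ _ _ (wfn n)); apply: good_specOK.
  have hvn : forall n, (Lrep_fun (r n) x)%:E <= v w'.
    by move=> n; rewrite -Ie; apply: hv; exists n.
  rewrite hf_fin // -/x; case hv' : (v w') => [b||].
  + rewrite lee_fin; apply: (@lim_le_ub R (fun n => Lrep_fun (r n) x) (f x) b (inc x).2) => n.
    by have := hvn n; rewrite hv' lee_fin.
  + exact: leey.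
  + by have := hvn 0%N; rewrite hv' leNgt ltNyr.
Qed.

Lemma second_part : exists h : K -> \bar R,
      [/\ E h, (forall w, (0 <= h w)%E),
          (forall w, X w \is a fin_num -> h w = (f (fine (X w)))%:E)
        & (forall r : nat -> Lrep R,
             (forall n, Lrep_wf (r n)) -> incr_to (fun n => Lrep_fun (r n)) f ->
             is_lub_in (Esup E) (range (fun n => Ival E X (r n))) h)].
Proof.
exists hf; split; [exact: E_hf | exact: hf0 | exact: hf_fin | exact: lub_part].
Qed.

End Spec.

Theorem mainTheorem5 (R : realType) (K : topologicalType)
    (E : set (K -> \bar R)) (X : K -> \bar R) (f : R -> R) :
  compact [set: K] -> hausdorff_space K -> extremally_disconnected K ->
  order_dense_ideal_with_unit E ->
  E X ->
  continuous f -> (forall x, 0 <= f x) ->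
  (exists M : R, forall x, M < `|x| -> f x = 0) ->
  (exists r : nat -> Lrep R,
      (forall n, Lrep_wf (r n)) /\ incr_to (fun n => Lrep_fun (r n)) f)
  /\ (exists h : K -> \bar R,
      [/\ E h, (forall w, (0 <= h w)%E),
          (forall w, X w \is a fin_num -> h w = (f (fine (X w)))%:E)
        & (forall r : nat -> Lrep R,
             (forall n, Lrep_wf (r n)) -> incr_to (fun n => Lrep_fun (r n)) f ->
             is_lub_in (Esup E) (range (fun n => Ival E X (r n))) h)]).
Proof.
move=> cK hK eK hE EX fc f0 [M hM]; split.
  exact: first_part.
exact: (@second_part R K E X hK cK eK hE EX f fc f0 M hM).
Qed.
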